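(* Let $\rho>0$ and let $k$ be a nonzero integer. For $X=\alpha\rho>0$ define \[ Z_k(X)=\frac{X^2\left(1-(-1)^k e^{-\pi X}\right)}{\left(k^2+X^2\right)\left(1-e^{-\pi X}\right)}. \] Then $Z_k$ is monotonically increasing in $X=\alpha\rho$, and \[ \lim_{\alpha\rho\to 0} Z_k=0,\qquad \lim_{\alpha\rho\to\infty} Z_k=1 . \]
   Context: Here $\alpha=(\sigma-1)\tau\ge 0$, where $\sigma>1$ is an elasticity of substitution and $\tau\ge0$ a transport-cost parameter, and $\rho>0$ is the radius of a circle; $Z_k$ depends on $\alpha$ and $\rho$ only through the product $\alpha\rho$. *)

(* Defs.v *)
From Stdlib Require Import Reals ZArith.
From Coquelicot Require Import Coquelicot.
Open Scope R_scope.

Definition Zk (k : Z) (X : R) : R :=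
  X ^ 2 * (1 - (-1) ^ (Z.abs_nat k) * exp (- PI * X))
  / ((IZR k ^ 2 + X ^ 2) * (1 - exp (- PI * X))).

(* Main.v *)
Require Import Defs.
From Stdlib Require Import ZArith Lia.
From Stdlib Require Import Reals Lra Psatz.
From Coquelicot Require Import Coquelicot.
Open Scope R_scope.
Lemma exp_lb t : 0 <= t -> 1 + t + t^2/2 + t^3/6 + t^4/24 <= exp t.
Proof.
  intros Ht.
  assert (H := sum_incr (fun i => / INR (Factorial.fact i) * t ^ i) 4 (exp t)
     (proj2_sig (exist_exp t))).
  simpl in H.
  refine (Rle_trans _ _ _ (Req_le _ _ _) (H _)).
  - field.
  - intros n. apply Rmult_le_pos.
  + apply Rlt_le, Rinv_0_lt_compat, lt_0_INR, Factorial.lt_O_fact.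
  + now apply pow_le.
Qed.
Lemma sinh_lb t : 0 <= t -> 2*t + t^3/3 <= exp t - exp (-t).
Proof.
  intros Ht. rewrite exp_Ropp. assert (H := exp_lb t Ht).
  set (E := exp t) in *. set (P := 1 + t + t^2/2 + t^3/6 + t^4/24) in *.
  assert (HP : 1 <= P) by (unfold P; nra).
  assert (HPP : 1 <= P * (1 - t + t^2/2 - t^3/6 + t^4/24)) by (unfold P; nra).
  assert (/E <= /P) by (apply Rinv_le_contravar; lra).
  assert (2*t + t^3/3 = P - (1 - t + t^2/2 - t^3/6 + t^4/24)) by (unfold P; field).
  assert (/P <= 1 - t + t^2/2 - t^3/6 + t^4/24).
  { apply (Rmult_le_reg_l P); [lra|]. rewrite Rinv_r by lra. lra. }
  lra.
Qed.
Definition F (s m X : R) := X ^ 2 * (1 - s * exp (- PI * X)) / ((m + X ^ 2) * (1 - exp (- PI * X))).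
Definition F' (s m X : R) := let q := exp (- PI * X) in
  (2*X*m*(1-q)*(1-s*q) + PI*X^2*q*(m+X^2)*(s-1)) / ((m+X^2)*(1-q))^2.
Lemma q_lt1 X : 0 < X -> exp (- PI * X) < 1.
Proof. intros. rewrite <- exp_0. apply exp_increasing. assert (0 < PI*X) by (apply Rmult_lt_0_compat; [exact PI_RGT_0|lra]). lra. Qed.
Lemma F_der s m X : 0 < X -> 0 < m -> is_derive (F s m) X (F' s m X).
Proof.
  intros HX Hm. assert (Hq := q_lt1 X HX). unfold F, F'.
  auto_derive. all: try (split; [|easy]).
  - apply Rmult_integral_contrapositive; split; nra.
  - field. split; nra.
Qed.
Lemma key m X : 1 <= m -> 0 < X ->
  PI * X * (m + X^2) < m * (exp (PI*X) - exp (- (PI * X))).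
Proof.
  intros Hm HX. assert (Hpi := PI2_3_2).
  assert (HT : 0 <= PI * X) by (apply Rmult_le_pos; lra).
  assert (H := sinh_lb _ HT).
  apply Rlt_le_trans with (m * (2 * (PI * X) + (PI * X) ^ 3 / 3)); [|nra].
  assert (HX3 : 0 < X^3) by (apply pow_lt; lra).
  assert (0 < PI * X * m) by (apply Rmult_lt_0_compat; nra).
  assert (m * PI^2 /3 - 1 > 0) by nra.
  assert (0 < PI * X^3 * (m * PI^2 /3 - 1)) by (apply Rmult_lt_0_compat; nra).
  replace (m * (2 * (PI * X) + (PI * X) ^ 3 / 3)) with
    (PI * X * (m + X^2) + (PI * X * m + PI * X^3 * (m * PI^2 /3 - 1))) by (unfold Rdiv; ring).
  lra.
Qed.
Lemma F'_pos s m X : (s = 1 \/ s = -1) -> 1 <= m -> 0 < X -> 0 < F' s m X.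
Proof.
  intros Hs Hm HX. assert (Hq := q_lt1 X HX). unfold F'.
  assert (Hq0 : 0 < exp (- PI * X)) by apply exp_pos.
  set (q := exp (- PI * X)) in *.
  apply Rdiv_lt_0_compat; [| apply pow_lt; apply Rmult_lt_0_compat; nra].
  destruct Hs as [-> | ->].
  - assert (0 < (1-q)*(1-q)) by nra.
    assert (0 < 2 * X * m) by nra. nra.
  - assert (HK := key m X Hm HX).
    replace (- (PI * X)) with (- PI * X) in HK by ring. fold q in HK.
    assert (HE : exp (PI * X) * q = 1).
    { unfold q. rewrite <- exp_plus. replace (PI * X + - PI * X) with 0 by ring. apply exp_0. }
    set (E := exp (PI*X)) in *.
    assert (0 < 2 * X * q) by nra.
    assert (HH : 2*X*m*(1-q)*(1 - -1*q) + PI*X^2*q*(m+X^2)*(-1-1) =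
       2 * X * q * (m * (E - q) - PI * X * (m + X^2))).
    { replace (1 - -1 * q) with (1 + q) by ring.
      transitivity (2*X*m*(1-q*q) - 2*PI*X^2*q*(m+X^2)); [ring|].
      replace (1 - q*q) with (q * (E - q)) by lra. ring. }
    rewrite HH. apply Rmult_lt_0_compat; lra.
Qed.
Lemma div_lt x D e : 0 < D -> x < e * D -> x / D < e.
Proof. intros. apply (Rmult_lt_reg_r D); [auto|]. unfold Rdiv; rewrite Rmult_assoc, Rinv_l; lra. Qed.
Lemma lt_div x D e : 0 < D -> e * D < x -> e < x / D.
Proof. intros. apply (Rmult_lt_reg_r D); [auto|]. unfold Rdiv; rewrite Rmult_assoc, Rinv_l; lra. Qed.

Lemma F_mono s m : (s = 1 \/ s = -1) -> 1 <= m ->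
  forall X Y, 0 < X -> X < Y -> F s m X < F s m Y.
Proof.
  intros Hs Hm X Y HX HXY.
  destruct (MVT_cor2 (F s m) (F' s m) X Y HXY) as [c [Hc1 Hc2]].
  - intros c Hc. apply is_derive_Reals. apply F_der; lra.
  - assert (0 < F' s m c) by (apply F'_pos; auto; lra).
    assert (0 < F' s m c * (Y - X)) by (apply Rmult_lt_0_compat; lra). lra.
Qed.

Lemma F_small s m X : (s = 1 \/ s = -1) -> 1 <= m -> 0 < X -> X < 1 ->
  0 <= F s m X <= 3 * X.
Proof.
  intros Hs Hm HX HX1. assert (Hq := q_lt1 X HX).
  assert (Hq0 : 0 < exp (- PI * X)) by apply exp_pos.
  assert (Hpi := PI2_3_2).
  assert (HE : exp (PI * X) * exp (- PI * X) = 1).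
  { rewrite <- exp_plus. replace (PI * X + - PI * X) with 0 by ring. apply exp_0. }
  assert (HEl : 1 + PI * X < exp (PI * X)) by (apply exp_ineq1; nra).
  unfold F. set (q := exp (- PI * X)) in *. set (E := exp (PI * X)) in *.
  assert (HD : 0 < (m + X^2) * (1 - q)) by nra.
  assert (HN : 0 <= X^2 * (1 - s*q)) by (destruct Hs as [-> | ->]; nra).
  split.
  - apply Rdiv_le_0_compat; lra.
  - apply Rlt_le, div_lt; [lra|].
    assert (H1 : 1 - s*q <= 2) by (destruct Hs as [-> | ->]; lra).
    assert (H2 : (E - 1) * (1 + PI*X) >= PI*X*E) by nra.
    assert (Ha : 3*PI > 2*(1+PI*X)) by nra.
    assert (Hb : 0 < X*E) by nra.
    assert (Hc : X*E*(3*PI) > X*E*(2*(1+PI*X))) by (apply Rmult_lt_compat_l; lra).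
    assert (H3 : 3*(E-1)*(1+PI*X) > 2*X*E*(1+PI*X)) by nra.
    assert (H4 : 3*(E-1) > 2*X*E) by nra.
    assert (H5 : 3*(1-q) > 2*X) by nra.
    assert (H6 : 3*X*(m+X^2)*(1-q) >= 3*X*(1-q)).
    { assert (0 <= (3*X*(1-q)) * (m - 1 + X^2)) by (apply Rmult_le_pos; nra). nra. }
    assert (X^2 * (1 - s*q) <= 2 * X^2) by nra.
    nra.
Qed.

Lemma F_big s m X : (s = 1 \/ s = -1) -> 1 <= m -> 1 <= X ->
  Rabs (F s m X - 1) <= 4 * m / X.
Proof.
  intros Hs Hm HX. assert (Hq := q_lt1 X ltac:(lra)).
  assert (Hq0 : 0 < exp (- PI * X)) by apply exp_pos.
  assert (Hpi := PI2_3_2).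
  assert (HE : exp (PI * X) * exp (- PI * X) = 1).
  { rewrite <- exp_plus. replace (PI * X + - PI * X) with 0 by ring. apply exp_0. }
  assert (HEl := exp_lb (PI * X) ltac:(nra)).
  unfold F. set (q := exp (- PI * X)) in *. set (E := exp (PI * X)) in *.
  assert (Ht : 3 <= PI*X) by nra.
  assert (0 <= (PI*X)^3) by (apply pow_le; lra).
  assert (0 <= (PI*X)^4) by (apply pow_le; lra).
  assert (HE' : E >= 1 + PI*X + (PI*X)^2/2) by lra.
  assert (HE4 : E >= 4) by nra.
  assert (HE2 : E >= 2 * X^2).
  { assert (PI*PI >= 9) by nra. assert ((PI*X)^2 = (PI*PI) * X^2) by ring.
    assert (0 <= X^2) by (apply pow_le; lra). nra. }
  assert (Hq4 : q <= 1/4) by nra.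
  assert (HqX : q * X^2 <= 1/2) by nra.
  assert (HD : 0 < (m + X^2) * (1 - q)) by nra.
  assert (Heq : X ^ 2 * (1 - s * q) / ((m + X ^ 2) * (1 - q)) - 1 =
     (-m + q*m + q*X^2*(1-s)) / ((m + X ^ 2) * (1 - q))) by (field; repeat split; nra).
  rewrite Heq.
  assert (HND : Rabs (-m + q*m + q*X^2*(1-s)) <= 2*m).
  { destruct Hs as [-> | ->]; apply Rabs_le; nra. }
  rewrite Rabs_div by lra. rewrite (Rabs_pos_eq ((m + X ^ 2) * (1 - q))) by lra.
  unfold Rdiv. apply Rmult_le_compat; try lra.
  - apply Rabs_pos.
  - left; apply Rinv_0_lt_compat; lra.
  - apply Rinv_le_contravar; nra.
Qed.
Lemma m_ge1 (k : Z) : k <> 0%Z -> 1 <= IZR k ^ 2.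
Proof.
  intros hk. destruct (Z_lt_le_dec 0 k) as [H|H].
  - assert (1 <= IZR k) by (apply IZR_le; lia). nra.
  - assert (IZR k <= -1) by (apply IZR_le; lia). nra.
Qed.
Lemma s_pm (k : Z) : (-1) ^ (Z.abs_nat k) = 1 \/ (-1) ^ (Z.abs_nat k) = -1.
Proof.
  destruct (Nat.Even_or_Odd (Z.abs_nat k)) as [[p Hp]|[p Hp]]; rewrite Hp.
  - left. apply pow_1_even.
  - right. replace (2 * p + 1)%nat with (S (2 * p)) by lia. apply pow_1_odd.
Qed.

Theorem lemma1 (k : Z) (hk : k <> 0%Z) :
  (forall X Y : R, 0 < X -> X < Y -> Zk k X < Zk k Y) /\
  filterlim (Zk k) (at_right 0) (locally 0) /\
  filterlim (Zk k) (Rbar_locally p_infty) (locally 1).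
Proof.
  assert (Hm := m_ge1 k hk). assert (Hs := s_pm k).
  set (s := (-1) ^ (Z.abs_nat k)) in *. set (m := IZR k ^ 2) in *.
  assert (HZ : forall X, Zk k X = F s m X) by reflexivity.
  split; [|split].
  - intros X Y HX HXY. rewrite !HZ. now apply F_mono.
  - apply filterlim_locally. intros eps.
    assert (He : 0 < Rmin 1 (eps/3)).
    { apply Rmin_glb_lt; [lra|]. destruct eps as [e He]; simpl; lra. }
    exists (mkposreal _ He). intros y Hy Hy0.
    change (Rabs (y - 0) < Rmin 1 (eps/3)) in Hy.
    change (Rabs (Zk k y - 0) < eps).
    rewrite Rminus_0_r in Hy |- *. rewrite Rabs_pos_eq in Hy by lra.
    assert (Hy1 := Rmin_l 1 (eps/3)). assert (Hy2 := Rmin_r 1 (eps/3)).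
    rewrite HZ. destruct (F_small s m y Hs Hm Hy0 ltac:(lra)).
    rewrite Rabs_pos_eq by lra. lra.
  - apply filterlim_locally. intros eps.
    exists (Rmax 1 (4 * m / eps)). intros y Hy.
    change (Rabs (Zk k y - 1) < eps).
    assert (H1 := Rmax_l 1 (4 * m / eps)). assert (H2 := Rmax_r 1 (4 * m / eps)).
    rewrite HZ. eapply Rle_lt_trans; [apply F_big; auto; lra|].
    destruct eps as [e He]; simpl in *.
    apply div_lt; [lra|].
    assert (4 * m / e * e = 4 * m) by (field; lra). nra.
Qed.
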